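(* Let $X$ be a real Banach space such that $X^*$ and $X^{**}$ are strictly convex, $X$ has the w-Kadec-Klee property and $X^*$ has the $w^*$-Kadec-Klee property. Let $v\in X\setminus\{0\}$, let $(t_i)_{i\in I}$ be a net of positive reals with $t_i\to0$, and let $(w_i)_{i\in I}\subset X$. If there is a net $(z_i^* )_{i\in I}\subset X^*$ with $z_i^*\in J_{t_i}(w_i)$ for all $i$ and $\|z_i^*-J(v)\|\to0$, then some subnet of $(w_i)_{i\in I}$ converges in norm to $v$.
   Context: For $\varepsilon\ge0$, $J_\varepsilon(w):=\{w^*\in X^*: \tfrac12\|y\|^2+\varepsilon\ge \tfrac12\|w\|^2+\langle w^*,y-w\rangle\ \forall y\in X\}$, and $J=J_0$ is the duality mapping, single-valued since $X^*$ is strictly convex. $X$ has the w-Kadec-Klee property if every net with $x_i\to x$ weakly and $\|x_i\|\to\|x\|$ converges in norm; $X^*$ has the $w^*$-Kadec-Klee property if every net with $x_i^*\to x^*$ weak$^*$ and $\|x_i^*\|\to\|x^*\|$ converges in norm. *)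

(* Defs.v *)
From HB Require Import structures.
From mathcomp Require Import all_boot all_order all_algebra.
From mathcomp Require Import all_classical all_reals all_analysis.
Set Implicit Arguments. Unset Strict Implicit. Unset Printing Implicit Defensive.
Import Order.TTheory GRing.Theory Num.Theory.
Import numFieldNormedType.Exports.
Local Open Scope classical_set_scope.
Local Open Scope ring_scope.

Record dirset := DirSet {
  dcar :> Type;
  dle : dcar -> dcar -> Prop;
  dle_refl : forall i, dle i i;
  dle_trans : forall i j k, dle i j -> dle j k -> dle i k;
  dle_directed : forall i j, exists k, dle i k /\ dle j k;
  d_inhabited : inhabited dcar }.

Definition net_cvg {R : realType} (D : dirset) (u : D -> R) (l : R) : Prop :=
  forall e : R, 0 < e -> exists i0 : D, forall i, dle i0 i -> `|u i - l| < e.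

(* Willard subnet: (w \o phi) with phi : J -> I eventually above every i0 *)
Definition cofinal_map (J I : dirset) (phi : J -> I) : Prop :=
  forall i0 : I, exists j0 : J, forall j, dle j0 j -> dle i0 (phi j).

Section Banach.
Context {R : realType} {X : normedModType R}.

Definition is_dual (f : X -> R) : Prop :=
  (forall (a : R) (x y : X), f (a *: x + y) = a * f x + f y) /\ continuous f.

Definition dnorm (f : X -> R) : R :=
  sup [set `|f x| | x in [set x : X | `|x| <= 1]].

Definition is_bidual (phi : (X -> R) -> R) : Prop :=
  (forall (a : R) (f g : X -> R), is_dual f -> is_dual g ->
      phi (fun x => a * f x + g x) = a * phi f + phi g) /\
  (exists M : R, forall f, is_dual f -> `|phi f| <= M * dnorm f).

Definition bnorm (phi : (X -> R) -> R) : R :=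
  sup [set `|phi f| | f in [set f | is_dual f /\ dnorm f <= 1]].

Definition dual_strictly_convex : Prop :=
  forall f g : X -> R, is_dual f -> is_dual g ->
    dnorm f = 1 -> dnorm g = 1 -> dnorm (fun x => f x + g x) = 2 -> f = g.

(* elements of X^** are identified when they agree on X^* *)
Definition bidual_strictly_convex : Prop :=
  forall phi psi : (X -> R) -> R, is_bidual phi -> is_bidual psi ->
    bnorm phi = 1 -> bnorm psi = 1 -> bnorm (fun f => phi f + psi f) = 2 ->
    forall f, is_dual f -> phi f = psi f.

Definition w_Kadec_Klee : Prop :=
  forall (D : dirset) (x : D -> X) (x0 : X),
    (forall f, is_dual f -> net_cvg (fun i => f (x i)) (f x0)) ->
    net_cvg (fun i => `|x i|) `|x0| ->
    net_cvg (fun i => `|x i - x0|) 0.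

Definition wstar_Kadec_Klee : Prop :=
  forall (D : dirset) (f : D -> X -> R) (f0 : X -> R),
    (forall i, is_dual (f i)) -> is_dual f0 ->
    (forall x : X, net_cvg (fun i => f i x) (f0 x)) ->
    net_cvg (fun i => dnorm (f i)) (dnorm f0) ->
    net_cvg (fun i => dnorm (fun x => f i x - f0 x)) 0.

(* ---------- epsilon-subdifferential of 1/2 ||.||^2 ---------- *)
Definition Jeps (eps : R) (w : X) (ws : X -> R) : Prop :=
  is_dual ws /\
  forall y : X, `|y| ^+ 2 / 2 + eps >= `|w| ^+ 2 / 2 + ws (y - w).

End Banach.

(* Main.v *)
Require Import Defs.
From HB Require Import structures.
From mathcomp Require Import all_boot all_order all_algebra.
From mathcomp Require Import all_classical all_reals all_analysis.
From mathcomp Require Import ring lra.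
Import Order.TTheory GRing.Theory Num.Theory.
Import numFieldNormedType.Exports.
Local Open Scope classical_set_scope.
Local Open Scope ring_scope.

Set Implicit Arguments.
Section S.
Context {R : realType} {X : normedModType R}.

Lemma dual0 (f : X -> R) : is_dual f -> f 0 = 0.
Proof. move=> [lf _]; have := lf 1 0 0; rewrite scale1r addr0 mul1r.
move=> h; lra. Qed.

Lemma dualZ (f : X -> R) a x : is_dual f -> f (a *: x) = a * f x.
Proof. move=> hf; have := hf.1 a x 0; rewrite addr0 dual0 // addr0. by []. Qed.

Lemma dual_r (f : X -> R) : is_dual f -> exists2 r : R, 0 < r & forall x, `|x| < r -> `|f x| < 1.
Proof.
move=> hf; have := hf.2 0.
move=> /cvgrPdist_lt /(_ 1 ltr01) /nbhs_ballP [r r0 Hr].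
exists r => // x xr; have := Hr x. rewrite /ball /= dual0 // sub0r normrN; apply.
have hb : ball (0:X) r x by rewrite -ball_normE /= sub0r normrN.
exact: hb.
Qed.

Lemma dual_ub (f : X -> R) : is_dual f ->
  has_ubound [set `|f x| | x in [set x : X | `|x| <= 1]].
Proof.
move=> hf; have [r r0 Hr] := dual_r hf.
exists (2 / r) => _ [x /= x1 <-].
have hr2 : `|r / 2| = r / 2 by rewrite ger0_norm // divr_ge0 // ltW.
have := Hr ((r / 2) *: x); rewrite normrZ hr2 dualZ // normrM hr2 => h.
have : r / 2 * `|x| < r.
  have : r / 2 * `|x| <= r / 2 by rewrite ler_piMr //; lra.
  move=> h1; apply: (le_lt_trans h1); rewrite ltr_pdivrMr //; lra.
move/h => h2; rewrite ler_pdivlMr //; nra.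
Qed.

Lemma dnorm_ge0 (f : X -> R) : is_dual f -> 0 <= dnorm f.
Proof.
move=> hf; have h := ub_le_sup (dual_ub hf).
apply: le_trans (h `|f 0| _); first exact: normr_ge0.
by exists 0 => //=; rewrite normr0 ler01.
Qed.

Lemma dual_bound (f : X -> R) : is_dual f -> forall x, `|f x| <= dnorm f * `|x|.
Proof.
move=> hf x; have [->|x0] := eqVneq x 0.
  by rewrite dual0 // !normr0 mulr0.
have nx : 0 < `|x| by rewrite normr_gt0.
have : `|f (`|x|^-1 *: x)| <= dnorm f.
  apply: (ub_le_sup (dual_ub hf)); exists (`|x|^-1 *: x) => //=.
  by rewrite normrZ normfV normr_id mulVf // gt_eqF.
rewrite dualZ // normrM normfV normr_id => h.
by rewrite -ler_pdivrMr // mulrC.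
Qed.

Lemma le_small (c d k : R) : 0 <= k -> (forall s, 0 < s -> c <= d + s * k) -> c <= d.
Proof.
move=> k0 H; apply/ler_addgt0Pr => e e0.
have k1 : 0 < k + 1 by lra.
have s0 : 0 < e / (k + 1) by rewrite divr_gt0.
have := H _ s0; have hs : e / (k + 1) * (k + 1) = e by rewrite mulfVK // gt_eqF.
nra.
Qed.

Lemma J0_ub (Jv : X -> R) v : Jeps 0 v Jv -> forall x, Jv x <= `|v| * `|x|.
Proof.
move=> [hJ H] x; apply: (@le_small _ _ (`|x| ^+ 2 / 2)).
  by rewrite divr_ge0 // exprn_ge0.
move=> s s0; have := H (v + s *: x).
have -> : v + s *: x - v = s *: x by rewrite addrAC subrr add0r.
rewrite dualZ // addr0.
have h1 : `|v + s *: x| <= `|v| + s * `|x|.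
  by apply: le_trans (ler_normD _ _) _; rewrite normrZ gtr0_norm.
have h2 : `|v + s *: x| ^+ 2 <= (`|v| + s * `|x|) ^+ 2.
  by rewrite lerXn2r // nnegrE // addr_ge0 // mulr_ge0 // ltW.
have := normr_ge0 x; have := normr_ge0 v.
move=> n1 n2 h3; nra.
Qed.

Lemma J0_norm (Jv : X -> R) v : Jeps 0 v Jv -> forall x, `|Jv x| <= `|v| * `|x|.
Proof.
move=> hJ x; have hd := hJ.1; rewrite ler_norml J0_ub // andbT.
have e : Jv (- x) = - Jv x.
  have := hd.1 1 x (- x); rewrite scale1r subrr dual0 //.
  lra.
have := J0_ub hJ (- x); rewrite e normrN.
lra.
Qed.

Lemma J0_v (Jv : X -> R) v : Jeps 0 v Jv -> Jv v = `|v| ^+ 2.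
Proof.
move=> hJ; apply/eqP; rewrite eq_le; apply/andP; split.
  by have := J0_ub hJ v; rewrite expr2.
apply: (@le_small _ _ (`|v| ^+ 2 / 2)).
  by rewrite divr_ge0 // exprn_ge0.
move=> s s0; have := hJ.2 ((1 - s) *: v).
have -> : (1 - s) *: v - v = (- s) *: v.
  by rewrite scalerBl scale1r addrAC subrr add0r scaleNr.
have hd := hJ.1; rewrite dualZ // normrZ exprMn real_normK ?num_real // addr0.
move=> h; nra.
Qed.

Lemma ultra_cvg_bounded (T : Type) (G : set_system T) (u : T -> R) (M : R) :
  UltraFilter G -> G [set i | `|u i| <= M] -> exists p : R, u @ G --> p.
Proof.
move=> GU GM.
have cpt := @segment_compact R (- M) M.
have Hu : G (u @^-1` [set` `[- M, M]]).
  by apply: filterS GM => i /= h; rewrite in_itv /= -ler_norml.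
have [p [_ cl]] := cpt (u @ G) _ Hu.
exists p => N Np /=.
have [//|GC] := in_ultra_setVsetC (u @^-1` N) GU.
have : (u @ G) (~` N) by [].
move=> /cl /(_ Np) [x [/= nx Nx]]; by [].
Qed.

Lemma net_to_G (D : dirset) (G : set_system D) {FG : Filter G} (h : D -> R) l :
  (forall i0, G [set i | dle i0 i]) -> net_cvg h l -> h @ G --> l.
Proof.
move=> HG H; apply/cvgrPdist_lt => e e0; have [i0 Hi] := H e e0.
by apply: filterS (HG i0) => i /= hi; rewrite distrC; exact: Hi.
Qed.

Lemma bnorm_eq (Phi : (X -> R) -> R) (c : R) f0 : 0 <= c ->
  (forall f, is_dual f -> `|Phi f| <= c * dnorm f) ->
  is_dual f0 -> dnorm f0 <= 1 -> Phi f0 = c -> bnorm Phi = c.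
Proof.
move=> c0 Hb hf0 n0 P0.
have ub : ubound [set `|Phi f| | f in [set f | is_dual f /\ dnorm f <= 1]] c.
  move=> _ [f [hf n1] <-]; apply: le_trans (Hb f hf) _.
  by rewrite ler_piMr.
apply/eqP; rewrite eq_le; apply/andP; split.
  by apply: ge_sup => //; exists `|Phi f0|, f0.
have -> : c = `|Phi f0| by rewrite P0 ger0_norm.
by apply: (ub_le_sup (ex_intro _ c ub)); exists f0.
Qed.

Section Main.
Context (Hbsc : @bidual_strictly_convex R X) (v : X) (Jv : X -> R)
  (hJ : Jeps 0 v Jv) (hv : v != 0) (D : dirset) (w : D -> X)
  (Hn : net_cvg (fun i => `|w i|) `|v|)
  (HJ : net_cvg (fun i => Jv (w i)) (`|v| ^+ 2)).

Lemma ulim_eval (G : set_system D) : UltraFilter G ->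
  (forall i0, G [set i | dle i0 i]) ->
  forall f, is_dual f -> (fun i => f (w i)) @ G --> f v.
Proof.
move=> GU HG.
have hd := hJ.1.
set a := `|v|.
have a0 : 0 < a by rewrite normr_gt0.
have Hw : (fun i => `|w i|) @ G --> a by exact: net_to_G HG Hn.
have Hbd : forall f, is_dual f -> G [set i | `|f (w i)| <= dnorm f * (a + 1)].
  move=> f hf; have [i0 Hi] := Hn 1 ltr01.
  apply: filterS (HG i0) => i /= /Hi h.
  apply: le_trans (dual_bound hf _) _; apply: ler_wpM2l; first exact: dnorm_ge0.
  move: h; rewrite -/a ltr_norml; lra.
pose L (f : X -> R) : R := lim ((fun i => f (w i)) @ G).
have Hc : forall f, is_dual f -> (fun i => f (w i)) @ G --> L f.
  move=> f hf; have [p Hp] := ultra_cvg_bounded _ _ GU (Hbd f hf).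
  exact: cvgP Hp.
have LJ : L Jv = a ^+ 2.
  exact: (norm_cvg_lim (net_to_G HG HJ)).
have Lb : forall f, is_dual f -> `|L f| <= dnorm f * a.
  move=> f hf.
  have H1 : (fun i => `|f (w i)| - dnorm f * `|w i|) @ G --> `|L f| - dnorm f * a.
    apply: cvgB; first exact: cvg_norm (Hc f hf).
    exact: cvgMl_tmp.
  have : `|L f| - dnorm f * a <= 0.
    apply: (cvgr_to_le H1); near=> i.
    by rewrite subr_le0; exact: dual_bound.
  lra.
pose phi f := L f / a.
pose psi (f : X -> R) := f v / a.
pose f0 x := Jv x / a.
have hf0 : is_dual f0.
  split; first by move=> c x y; rewrite /f0 hd.1; field; exact: lt0r_neq0.
  move=> x; apply: cvgMr_tmp; exact: hd.2 x.
have nf0 : dnorm f0 <= 1.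
  apply: ge_sup; first by exists `|f0 0|, 0 => //=; rewrite normr0 ler01.
  move=> _ [x /= x1 <-]; rewrite /f0 normrM normfV (gtr0_norm a0).
  rewrite ler_pdivrMr // mul1r; apply: le_trans (J0_norm hJ x) _.
  by rewrite ler_piMr // ltW.
have Lf0 : L f0 = a.
  apply: norm_cvg_lim.
  have -> : a = a ^+ 2 / a by rewrite expr2 mulfK // gt_eqF.
  exact: cvgMr_tmp (net_to_G HG HJ).
have Jvv := J0_v hJ.
have phib : forall f, is_dual f -> `|phi f| <= 1 * dnorm f.
  move=> f hf; rewrite /phi normrM normfV (gtr0_norm a0) mul1r.
  by rewrite ler_pdivrMr //; exact: Lb.
have psib : forall f, is_dual f -> `|psi f| <= 1 * dnorm f.
  move=> f hf; rewrite /psi normrM normfV (gtr0_norm a0) mul1r.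
  by rewrite ler_pdivrMr //; exact: dual_bound.
have Llin : forall c f g, is_dual f -> is_dual g ->
    L (fun x => c * f x + g x) = c * L f + L g.
  move=> c f g hf hg; apply: norm_cvg_lim.
  apply: (@cvgD _ _ _ _ _ (fun i => c * f (w i)) (fun i => g (w i))).
    exact: cvgMl_tmp (Hc f hf).
  exact: Hc g hg.
have Bphi : is_bidual phi.
  split; last by exists 1.
  move=> c f g hf hg; rewrite /phi Llin //; field; exact: lt0r_neq0.
have Bpsi : is_bidual psi.
  split; last by exists 1.
  move=> c f g hf hg; rewrite /psi; field; exact: lt0r_neq0.
have N1 : bnorm phi = 1.
  apply: (@bnorm_eq phi 1 f0) => //.
  by rewrite /phi Lf0 divff // gt_eqF.
have N2 : bnorm psi = 1.
  apply: (@bnorm_eq _ _ f0) => //.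
  by rewrite /psi /f0 Jvv -/a expr2 mulfK ?divff // gt_eqF.
have N3 : bnorm (fun f => phi f + psi f) = 2.
  apply: (@bnorm_eq _ _ f0) => //.
  - move=> f hf; apply: le_trans (ler_normD _ _) _.
    have := phib f hf; have := psib f hf; lra.
  - rewrite /phi /psi Lf0 /f0 Jvv -/a divff ?gt_eqF //.
    rewrite expr2 mulfK ?divff ?gt_eqF //.
move=> f hf; have := Hbsc Bphi Bpsi N1 N2 N3 hf.
rewrite /phi /psi => /(congr1 (fun y => y * a)); rewrite !divfK ?gt_eqF // => <-.
exact: Hc.
Unshelve. all: by end_near.
Qed.
End Main.

Lemma net_both {D : dirset} {P Q : D -> Prop} :
  (exists i0, forall i, dle i0 i -> P i) -> (exists i0, forall i, dle i0 i -> Q i) ->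
  exists i0, forall i, dle i0 i -> P i /\ Q i.
Proof.
move=> [i1 H1] [i2 H2]; have [k [k1 k2]] := dle_directed i1 i2.
exists k => i ki; split; [apply: H1|apply: H2]; exact: dle_trans ki.
Qed.

Lemma net_add0 {D : dirset} (p q : D -> R) : net_cvg p 0 -> net_cvg q 0 ->
  net_cvg (fun i => p i + q i) 0.
Proof.
move=> hp hq e e0; have e2 : 0 < e / 2 by rewrite divr_gt0.
have [k Hk] := net_both (hp _ e2) (hq _ e2).
exists k => i /Hk []; rewrite !subr0 => h1 h2.
apply: le_lt_trans (ler_normD _ _) _; lra.
Qed.

Lemma net_scale0 {D : dirset} (c : R) (p : D -> R) : net_cvg p 0 ->
  net_cvg (fun i => c * p i) 0.
Proof.
move=> hp e e0; have c1 : 0 < `|c| + 1 by rewrite ltr_wpDl.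
have e2 : 0 < e / (`|c| + 1) by rewrite divr_gt0.
have [k Hk] := hp _ e2; exists k => i /Hk; rewrite !subr0 normrM => h.
have : `|c| * `|p i| <= `|c| * (e / (`|c| + 1)).
  by rewrite ler_wpM2l // ltW.
have : `|c| * (e / (`|c| + 1)) < e.
  rewrite mulrA ltr_pdivrMr //; have := normr_ge0 c; nra.
move=> h1 h2; exact: le_lt_trans h2 h1.
Qed.

Lemma net_mul0 {D : dirset} (p q : D -> R) : net_cvg p 0 -> net_cvg q 0 ->
  net_cvg (fun i => p i * q i) 0.
Proof.
move=> hp hq e e0.
have [k Hk] := net_both (hp _ ltr01) (hq _ e0).
exists k => i /Hk []; rewrite !subr0 normrM => h1 h2.
have := normr_ge0 (p i); have := normr_ge0 (q i); nra.
Qed.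

Lemma net_squeeze {D : dirset} (x q : D -> R) l : net_cvg q 0 ->
  (forall i, `|x i - l| <= q i) -> net_cvg x l.
Proof.
move=> hq H e e0; have [k Hk] := hq e e0; exists k => i /Hk.
rewrite subr0 => h; apply: le_lt_trans (H i) _; exact: le_lt_trans (ler_norm _) h.
Qed.

Lemma net_sq {D : dirset} (u p : D -> R) : (forall i, 0 <= u i) -> net_cvg p 0 ->
  (forall i, u i ^+ 2 <= p i * (1 + u i)) -> net_cvg u 0.
Proof.
move=> u0 hp H e e0.
set d := Num.min (e / 2) (e ^+ 2 / 2).
have d0 : 0 < d by rewrite lt_min !divr_gt0 // exprn_gt0.
have [k Hk] := hp d d0; exists k => i /Hk; rewrite !subr0 => h.
rewrite ger0_norm //; rewrite ltNge; apply/negP => eu.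
have h1 : p i < e / 2 by apply: le_lt_trans (ler_norm _) (lt_le_trans h _); rewrite ge_min lexx.
have h2 : p i < e ^+ 2 / 2 by apply: le_lt_trans (ler_norm _) (lt_le_trans h _); rewrite ge_min lexx orbT.
have := H i; have := u0 i; rewrite expr2 in h2 *; nra.
Qed.

Lemma dual_sub (f g : X -> R) : is_dual f -> is_dual g -> is_dual (fun x => f x - g x).
Proof.
move=> hf hg; split.
  by move=> c x y; rewrite hf.1 hg.1; ring.
by move=> x; apply: cvgB; [exact: hf.2 x|exact: hg.2 x].
Qed.

Lemma dualB (f : X -> R) x y : is_dual f -> f (x - y) = f x - f y.
Proof.
move=> hf; have e : f (- y) = - f y.
  have := hf.1 1 y (- y); rewrite scale1r subrr dual0 //; lra.
by have := hf.1 1 x (- y); rewrite scale1r e; lra.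
Qed.

Lemma pointwise (v : X) Jv (t : R) (wi : X) (z : X -> R) :
  Jeps 0 v Jv -> 0 <= t -> Jeps t wi z ->
  `| `|wi| - `|v| | ^+ 2 <= (2 * t + (4 * `|v| + 2) * dnorm (fun x => z x - Jv x))
       * (1 + `| `|wi| - `|v| |) /\
  `|Jv wi - `|v| ^+ 2| <= 2 * `|v| * `| `|wi| - `|v| |
     + 1 / 2 * (`| `|wi| - `|v| | * `| `|wi| - `|v| |)
     + 2 * `|v| * dnorm (fun x => z x - Jv x)
     + dnorm (fun x => z x - Jv x) * `| `|wi| - `|v| | + t.
Proof.
move=> hJ t0 hz.
have hd := hJ.1; have hzd := hz.1; have hdiff := dual_sub hzd hd.
have d0 := dnorm_ge0 hdiff.
set d := dnorm _ in d0 *.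
have b1 := dual_bound hdiff v; have b2 := dual_bound hdiff wi.
rewrite -/d /= in b1 b2.
have b3 := J0_norm hJ wi.
have Jvv := J0_v hJ.
have F4 := hz.2 v; rewrite dualB // in F4.
set a := `|v| in b1 b3 Jvv F4 *.
set n := `|wi| in b2 b3 F4 *.
set u := `|n - a|.
have u1 : n - a <= u by exact: ler_norm.
have u2 : a - n <= u by rewrite /u distrC; exact: ler_norm.
have u3 : u ^+ 2 = (n - a) ^+ 2 by rewrite /u real_normK // num_real.
have a0 : 0 <= a by exact: normr_ge0.
have n0 : 0 <= n by exact: normr_ge0.
have u0 : 0 <= u by exact: normr_ge0.
have /andP [c1 c1'] : - (d * a) <= z v - Jv v <= d * a by rewrite -ler_norml.
have /andP [c2 c2'] : - (d * n) <= z wi - Jv wi <= d * n by rewrite -ler_norml.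
have /andP [c3 c3'] : - (a * n) <= Jv wi <= a * n by rewrite -ler_norml.
rewrite Jvv in c1 c1'.
clear b1 b2 b3.
have key : (n - a) ^+ 2 / 2 <= t + d * (a + n).
  rewrite !expr2 in F4 *; nra.
split.
  rewrite u3; have : n <= a + u by lra.
  move=> nu; nra.
rewrite ler_norml; apply/andP; split.
  rewrite !expr2 in F4 key u3 *; nra.
rewrite !expr2 in F4 key u3 *; nra.
Qed.

Lemma weak_conv (Hbsc : @bidual_strictly_convex R X) (v : X) (Jv : X -> R)
  (hJ : Jeps 0 v Jv) (hv : v != 0) (D : dirset) (w : D -> X)
  (Hn : net_cvg (fun i => `|w i|) `|v|)
  (HJ : net_cvg (fun i => Jv (w i)) (`|v| ^+ 2)) :
  forall f, is_dual f -> net_cvg (fun i => f (w i)) (f v).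
Proof.
move=> f hf e e0; apply: contrapT => H.
pose B := [set i : D | e <= `|f (w i) - f v|].
have cof : forall i0, exists i, dle i0 i /\ B i.
  move=> i0; apply: contrapT => H2; apply: H; exists i0 => i hi.
  apply: contrapT => H3; apply: H2; exists i; split => //.
  by rewrite /B /= leNgt; apply/negP.
pose F := filter_from setT (fun i0 => [set i | dle i0 i /\ B i]).
have FF : Filter F.
  apply: filter_fromT_filter.
    by have [i0] := d_inhabited D; exists i0.
  move=> i j; have [k [ik jk]] := dle_directed i j; exists k.
  by move=> x [kx Bx]; split; split => //; apply: dle_trans kx.
have FP : ProperFilter F.
  apply: filter_from_proper => i _; have [x [ix Bx]] := cof i.
  by exists x.
have [G [GU FG]] := ultraFilterLemma FP.
have HG : forall i0, G [set i | dle i0 i].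
  move=> i0; apply: FG; exists i0 => // x [] //.
have GB : G B by apply: FG; have [i0] := d_inhabited D; exists i0 => // x [].
have := ulim_eval Hbsc hJ hv w Hn HJ GU HG hf.
move=> /cvgrPdist_lt /(_ e e0) Gl.
have [x [/= h1 h2]] := filter_ex (filterI Gl GB).
by move: h2; rewrite /B /= distrC leNgt h1.
Qed.
End S.

Unset Implicit Arguments.

Theorem lemma4p1 (R : realType) (X : completeNormedModType R)
  (Hdsc : @dual_strictly_convex R X)
  (Hbsc : @bidual_strictly_convex R X)
  (HwKK : @w_Kadec_Klee R X)
  (HwsKK : @wstar_Kadec_Klee R X)
  (v : X) (hv : v != 0)
  (I : dirset) (t : I -> R) (ht_pos : forall i, 0 < t i) (ht0 : net_cvg t 0)
  (w : I -> X) :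
  (exists (zs : I -> X -> R) (Jv : X -> R),
      Jeps 0 v Jv /\
      (forall i, Jeps (t i) (w i) (zs i)) /\
      net_cvg (fun i => dnorm (fun x => zs i x - Jv x)) 0) ->
  exists (K : dirset) (phi : K -> I),
    cofinal_map phi /\ net_cvg (fun k => `|w (phi k) - v|) 0.
Proof.
move=> [zs [Jv [hJ [hz Hd]]]].
have P := fun i => pointwise hJ (ltW (ht_pos i)) (hz i).
have Hp := net_add0 (net_scale0 2 ht0) (net_scale0 (4 * `|v| + 2) Hd).
have Hu := net_sq (fun i => `| `|w i| - `|v| |) (fun i => normr_ge0 _) Hp (fun i => (P i).1).
have Hn : net_cvg (fun i => `|w i|) `|v|.
  move=> e e0; have [k Hk] := Hu e e0; exists k => i /Hk.
  by rewrite subr0 normr_id.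
have Hq := net_add0 (net_add0 (net_add0 (net_add0
   (net_scale0 (2 * `|v|) Hu) (net_scale0 (1 / 2) (net_mul0 Hu Hu)))
   (net_scale0 (2 * `|v|) Hd)) (net_mul0 Hd Hu)) ht0.
have HJ := net_squeeze (fun i => Jv (w i)) (`|v| ^+ 2) Hq (fun i => (P i).2).
exists I, id; split; first by move=> i0; exists i0.
exact: (HwKK I w v (@weak_conv R X Hbsc v Jv hJ hv I w Hn HJ) Hn).
Qed.
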